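(* Let $k\geq 2$ and $p\geq 0$ be integers and let $n=2(p+1)k+2$. Let \[ G=K_{1}\vee\big((pK_{2k})\cup K_{2k+1}\big), \] i.e. the graph obtained by taking the disjoint union of $p$ copies of $K_{2k}$ and one copy of $K_{2k+1}$ and adding one new vertex adjacent to all of its vertices. If $n\geq 6k+13$, then $q(G)<n+2k-2$.
   Context: All graphs are finite and simple. $K_r$ denotes the complete graph on $r$ vertices. For a graph $G$, the signless Laplacian is $Q(G)=D(G)+A(G)$, where $D(G)$ is the diagonal matrix of vertex degrees and $A(G)$ is the adjacency matrix; $q(G)$ denotes the largest eigenvalue of $Q(G)$. *)

(* Defs.v *)
From HB Require Import structures.
From mathcomp Require Import all_boot all_order all_algebra.
Set Implicit Arguments. Unset Strict Implicit. Unset Printing Implicit Defensive.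
Import Order.TTheory GRing.Theory Num.Theory.

Definition adj_mx (R : nzRingType) n (e : rel 'I_n) : 'M[R]_n :=
  \matrix_(i, j) ((e i j)%:R)%R.
Definition deg_mx (R : nzRingType) n (e : rel 'I_n) : 'M[R]_n :=
  diag_mx (\row_i ((#|[set j | e i j]|)%:R)%R).
Definition signless_laplacian (R : nzRingType) n (e : rel 'I_n) : 'M[R]_n :=
  (@deg_mx R n e + @adj_mx R n e)%R.

(* The graph K_1 v ((p K_{2k}) u K_{2k+1}) on n = 2(p+1)k+2 vertices:
   vertex 0 is the apex K_1; vertices 1..n-1 are split into consecutive
   blocks, blocks 0..p-1 of size 2k and block p of size 2k+1. *)
Definition nG (k p : nat) : nat := (2 * (p + 1) * k + 2)%N.
Definition blk (k p : nat) (v : nat) : nat := minn p (v.-1 %/ (2 * k)).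
Definition Gadj (k p : nat) : rel 'I_(nG k p) :=
  fun u v => (u != v) &&
    [|| (u : nat) == 0%N, (v : nat) == 0%N | blk k p u == blk k p v].
Arguments Gadj : clear implicits.
Arguments signless_laplacian : clear implicits.
Arguments adj_mx : clear implicits.
Arguments deg_mx : clear implicits.

(* Main.v *)
Require Import Defs.
From HB Require Import structures.
From mathcomp Require Import all_boot all_order all_algebra.
From mathcomp Require Import zify ring lra.
Import Order.TTheory GRing.Theory Num.Theory.
Set Implicit Arguments. Unset Strict Implicit.


Lemma col_eq (R : comNzRingType) n (e : rel 'I_n) (v : 'rV[R]_n) j :
  ((v *m signless_laplacian R n e) 0 j)%R
  = (v 0 j * (#|[set i | e j i]|)%:R + \sum_(i | e i j) v 0 i)%R.
Proof.
rewrite /signless_laplacian mulmxDr mxE /deg_mx mul_mx_diag !mxE.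
congr (_ + _)%R; rewrite [RHS]big_mkcond /=; apply: eq_bigr => i _.
by rewrite !mxE; case: (e i j); rewrite ?mulr1 ?mulr0.
Qed.

Lemma Gadj_sym k p u v : Gadj k p u v = Gadj k p v u.
Proof.
rewrite /Gadj (eq_sym v) (eq_sym (blk k p v)).
by case: (u == v) => //=; case: (nat_of_ord u == 0)%N; case: (nat_of_ord v == 0)%N; rewrite ?orbT.
Qed.

Definition B k p (j : 'I_(nG k p)) := [set i : 'I_(nG k p) | ((i : nat) != 0%N) && (blk k p i == blk k p j)].

Lemma card_B k p (j : 'I_(nG k p)) : (0 < k)%N -> (#|B j| <= 2 * k + 1)%N.
Proof.
move=> hk.
set b := blk k p j.
pose f (i : 'I_(nG k p)) : 'I_(2 * k).+1 := inord (i.-1 - 2 * k * b).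
have hb : forall i : 'I_(nG k p), i \in B j -> (2 * k * b <= i.-1 <= 2 * k * b + 2 * k)%N /\ (0 < i)%N.
  move=> i; rewrite inE => /andP[hi0 /eqP hbi].
  have hin := ltn_ord i. rewrite /nG in hin.
  have e := divn_eq i.-1 (2 * k). have hk2 : (0 < 2 * k)%N by lia. have hm := ltn_pmod i.-1 hk2.
  move: hbi; rewrite /b /blk => hbi.
  set q := (i.-1 %/ (2 * k))%N in e hbi.
  set r := (i.-1 %% (2 * k))%N in e hm.
  rewrite -hbi /minn.
  case: ltnP => hpq.
  - have h1 : (p * (2 * k) <= q * (2 * k))%N by apply: leq_mul => //; exact: ltnW.
    clearbody q r. have hi1 : (i.-1 + 1 = i)%N by lia.
    move: (nat_of_ord i) hi1 hin e h1 => ii; move: (ii.-1) => m. move=> *. split; last by lia. 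
    lia.
  - split; last by lia. nia.
have: (#|[set f x | x in B j]| <= (2 * k).+1)%N by rewrite -[X in (_ <= X)%N]card_ord max_card.
rewrite card_in_imset ?addn1 // => x y hx hy /(congr1 val).
have [hx1 hx2] := hb x hx. have [hy1 hy2] := hb y hy.
rewrite /f /= !inordK; try lia.
move=> h; apply: val_inj => /=; lia.
Qed.

Lemma B_self k p (j : 'I_(nG k p)) : (j : nat) != 0%N -> j \in B j.
Proof. by move=> hj; rewrite /B inE hj eqxx. Qed.

Lemma B_same k p (i j : 'I_(nG k p)) : i \in B j -> B i = B j.
Proof. by rewrite /B inE => /andP[_ /eqP h]; apply/setP => w; rewrite !inE h. Qed.

Lemma split_sum (V : nmodType) k p (i0 j : 'I_(nG k p)) (F : 'I_(nG k p) -> V) :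
  (i0 : nat) = 0%N -> (j : nat) != 0%N ->
  (\sum_(i | Gadj k p i j) F i + F j = F i0 + \sum_(i in B j) F i)%R.
Proof.
move=> h0 hj.
have hi0j : Gadj k p i0 j.
  rewrite /Gadj h0 eqxx /= andbT; apply/eqP => e; move: hj; by rewrite -e h0.
rewrite (bigD1 i0) //= (bigD1 j (B_self hj)) /= -addrA; congr (_ + _)%R.
rewrite addrC; congr (_ + _)%R; apply: eq_bigl => i.
change (Gadj k p i j && (i != i0) = (i \in B j) && (i != j)); rewrite /B inE /Gadj -!val_eqE /= h0 (negbTE hj) /=.
by case: (i == j :> nat); case: (nat_of_ord i == 0%N); case: (blk k p i == _); rewrite ?andbT ?andbF ?orbT.
Qed.

Local Open Scope ring_scope.

Theorem corollary1 (R : rcfType) (k p : nat) :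
  (2 <= k)%N -> (6 * k + 13 <= nG k p)%N ->
  forall a : R, eigenvalue (signless_laplacian R (nG k p) (Gadj k p)) a ->
  (a < (nG k p + 2 * k - 2)%:R)%R.
Proof.
move=> hk hn a /eigenvalueP [v hv vnz].
rewrite ltNge; apply/negP => hN.
have hn0 : (0 < nG k p)%N by lia.
pose i0 : 'I_(nG k p) := Ordinal hn0.
have h0 : (i0 : nat) = 0%N by [].
pose x i := v 0 i.
have col j : a * x j = x j * (#|[set i | Gadj k p j i]|)%:R + \sum_(i | Gadj k p i j) x i.
  by have := congr1 (fun M : 'M[R]_(1, nG k p) => M 0 j) hv; rewrite /= col_eq mxE => ->.
have hdeg0 : [set i | Gadj k p i0 i] = [set~ i0].
  by apply/setP => i; rewrite !inE /Gadj h0 eqxx /= eq_sym; case: (i != i0).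
have apex : a * x i0 = x i0 * ((nG k p)%:R - 1) + \sum_(i | i != i0) x i.
  rewrite col hdeg0 cardsC1 card_ord.
  have -> : ((nG k p).-1)%:R = (nG k p)%:R - 1 :> R.
    by rewrite -[in RHS](@prednK (nG k p)) // -addn1 natrD addrK.
  congr (_ + _); apply: eq_bigl => i; by rewrite /Gadj h0 eqxx /= orbT andbT.
have degj (j : 'I_(nG k p)) : (j : nat) != 0%N -> (#|[set i | Gadj k p j i]|)%:R = (#|B j|)%:R :> R.
  move=> hj; have := split_sum (fun _ => 1 : R) h0 hj.
  have -> : \sum_(i | Gadj k p i j) (1 : R) = \sum_(i in [set i | Gadj k p j i]) 1.
    by apply: eq_bigl => i; rewrite inE Gadj_sym.
  rewrite !sumr_const => h; apply: (@addIr _ 1); by rewrite h addrC.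
set T := fun j => \sum_(i in B j) x i.
have eqj (j : 'I_(nG k p)) : (j : nat) != 0%N -> (a - (#|B j|)%:R + 1) * x j = x i0 + T j.
  move=> hj; have := col j; rewrite degj //.
  have := split_sum x h0 hj => hs hc.
  have hs' : \sum_(i | Gadj k p i j) x i = x i0 + T j - x j by rewrite -hs addrK.
  rewrite hs' in hc; rewrite mulrDl mulrBl hc; ring.
have hkR : 2 <= k%:R :> R by rewrite (ler_nat R 2 k).
have hnR : 6 * k%:R + 13 <= (nG k p)%:R :> R.
  by move: hn; rewrite -(ler_nat R) natrD natrM.
have hNR : (nG k p)%:R + 2 * k%:R - 2 <= a.
  by move: hN; rewrite natrB; [rewrite natrD natrM | lia].
have hsR (j : 'I_(nG k p)) : (#|B j|)%:R <= 2 * k%:R + 1 :> R.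
  have hsk : (#|B j| <= 2 * k + 1)%N by apply: card_B; lia.
  by move: hsk; rewrite -(ler_nat R) natrD natrM.
have key (j : 'I_(nG k p)) : (j : nat) != 0%N -> (a - 2 * (#|B j|)%:R + 1) * x j = x i0.
  move=> hj.
  set s : R := (#|B j|)%:R.
  have hc : a - s + 1 != 0.
    have := hsR j; rewrite -/s => hs; rewrite gt_eqF //; lra.
  have hsum : (a - s + 1) * T j = s * (x i0 + T j).
    rewrite mulr_sumr; transitivity (\sum_(i in B j) (x i0 + T j)); last by rewrite sumr_const /s mulr_natl.
    apply: eq_bigr => i hi.
    have hi0 : (i : nat) != 0%N by move: hi; rewrite /B inE => /andP[].
    by rewrite /T -(B_same hi) -/(T i) -(eqj i hi0) /T (B_same hi).
  have hj' := eqj j hj; rewrite -/s in hj'.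
  have : (a - s + 1) * ((a - 2 * s + 1) * x j - x i0) = 0.
    have -> : (a - s + 1) * ((a - 2 * s + 1) * x j - x i0)
      = (a - s + 1) * ((a - s + 1) * x j) - s * ((a - s + 1) * x j) - (a - s + 1) * x i0 by ring.
    rewrite hj' -hsum; ring.
  by move/eqP; rewrite mulf_eq0 (negbTE hc) /= subr_eq0 => /eqP.
have hxi (i : 'I_(nG k p)) : i != i0 -> (i : nat) != 0%N by rewrite -val_eqE.
case: (eqVneq (x i0) 0) => hx0.
  apply: (negP vnz); apply/eqP/rowP => j; rewrite mxE.
  case: (eqVneq (j : nat) 0%N) => hj.
    by have -> : j = i0 by apply: val_inj.
  have := key j hj; rewrite hx0 => /eqP; rewrite mulf_eq0 => /orP[|/eqP//].
  have := hsR j => hs; rewrite gt_eqF //; lra.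
set nR : R := (nG k p)%:R.
have hS : \sum_(i | i != i0) x i = (a - nR + 1) * x i0.
  rewrite -[LHS](addKr (x i0 * (nR - 1))) -apex; ring.
set c0 := a - 4 * k%:R - 1.
have hb i : i != i0 -> c0 * (x i0 * x i) <= x i0 ^+ 2.
  move=> hi; have he := key i (hxi i hi); have hs := hsR i.
  rewrite -he; set e := a - 2 * (#|B i|)%:R + 1.
  have hce : c0 <= e by rewrite /e /c0; lra.
  have hc0 : 0 < c0 by rewrite /c0; lra.
  nra.
have hsum : c0 * ((a - nR + 1) * x i0 ^+ 2) <= x i0 ^+ 2 * (nR - 1).
  rewrite (_ : (a - nR + 1) * x i0 ^+ 2 = x i0 * ((a - nR + 1) * x i0)); last by ring.
  rewrite -hS !mulr_sumr.
  apply: le_trans (ler_sum _ hb) _.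
  rewrite (eq_bigl (fun i => i \in [set~ i0])); last by move=> i; rewrite !inE.
  rewrite sumr_const cardsC1 card_ord -mulr_natr.
  have -> : ((nG k p).-1)%:R = nR - 1 :> R.
    by rewrite /nR -[in RHS](@prednK (nG k p)) // -addn1 natrD addrK.
  by [].
have hq : 0 < x i0 ^+ 2 by rewrite lt0r sqrf_eq0 hx0 sqr_ge0.
have hfin : c0 * (a - nR + 1) <= nR - 1.
  by rewrite -(ler_pM2r hq) -mulrA [(nR - 1) * _]mulrC.
have h3 : 3 <= a - nR + 1 by rewrite /nR; lra.
have hc0 : 0 <= c0 by rewrite /c0 /nR in hnR hNR *; lra.
have : 3 * c0 <= c0 * (a - nR + 1) by rewrite mulrC ler_wpM2l.
rewrite /c0 /nR in hfin hnR hNR *; lra.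
Qed.
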